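(* Let $K,N,J\ge 1$ be integers with $N\le K$. Let $N_0>0$, and for $k=1,\dots,K$ let $h_k^{db}\in\mathbb{C}$ and $P_k'\ge 0$; set $\tilde N_k=N_0+|h_k^{db}|^2P_k'$ and $\bm{K}_{\tilde{\bm n}}=\mathrm{diag}\{\tilde N_1,\dots,\tilde N_K\}$. For $j=1,\dots,J$ let $h^{cb}_{j1},\dots,h^{cb}_{jK}\in\mathbb{C}\setminus\{0\}$ and $\bm H_j=\mathrm{diag}\{h^{cb}_{j1},\dots,h^{cb}_{jK}\}$; let $\bm M_{j1},\bm M_{j2}\in\mathbb{C}^{K\times N}$ and let $\bm A_{j1},\bm A_{j2}$ be $N\times N$ real diagonal matrices with nonnegative diagonal entries; set $$\bm K_{\bm x_j}=\bm M_{j1}\bm A_{j1}\bm M_{j1}^*+\bm M_{j2}\bm A_{j2}\bm M_{j2}^*,\qquad \bm H=(\bm H_1,\dots,\bm H_J),\qquad \bm K_{\bm x}=\mathrm{diag}\{\bm K_{\bm x_1},\dots,\bm K_{\bm x_J}\}$$ (block diagonal), and $\bm K_{\bm y}=\bm K_{\tilde{\bm n}}+\bm H\bm K_{\bm x}\bm H^*$. Define $$C_c=\log\det(\bm K_{\bm y})-\sum_{k=1}^K\log\tilde N_k,$$ and, writing $\lambda_K(\cdot)$ for the largest eigenvalue of a $K\times K$ Hermitian matrix, $$\tau_{K,j}=\lambda_K(\bm M_{j1}\bm A_{j1}\bm M_{j1}^* )+\lambda_K(\bm M_{j2}\bm A_{j2}\bm M_{j2}^* ).$$ Assume that $\bm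 K_{\tilde{\bm n}}$ and $\bm H\bm K_{\bm x}\bm H^*$ have no common eigenvector. Then $$C_c<\sum_{k=1}^{K}\log\left\{1+\frac{\sum_{j=1}^{J}\tau_{K,j}\cdot\max_{1\le k'\le K}|h^{cb}_{jk'}|^2}{N_0+|h_k^{db}|^2P_k'}\right\}.$$
   Context: This is the upper bound on the capacity of the cellular users in an uplink SCMA network coexisting with D2D pairs. The received signal is $\bm y=\sum_{j=1}^J\bm H_j\bm x_j+\tilde{\bm n}$, where $\bm x_j$ is the $K$-dimensional SCMA codeword of cellular user $j$ (zero-mean Gaussian with covariance $\bm K_{\bm x_j}$, obtained from an $N$-dimensional codeword via $\bm x_j=e^{i\theta_j}\bm V_j\bm M'\bm u_j$ with $\bm V_j\bm M'=(\bm M_{j1},\bm M_{j2})$ and $\bm u_j$ having covariance $\mathrm{diag}(\bm A_{j1},\bm A_{j2})$), and $\tilde{\bm n}\sim\mathcal{CN}(\bm 0,\bm K_{\tilde{\bm n}})$ is noise plus D2D interference; $C_c$ is the mutual information $I(\bm x;\bm y\mid\bm H)$ for Gaussian input. $\log$ denotes a logarithm to a fixed base greater than $1$. *)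

(* Defs.v *)
From HB Require Import structures.
From mathcomp Require Import all_boot all_order all_algebra.
From mathcomp Require Import complex.
From mathcomp Require Import classical_sets reals exp.
Set Implicit Arguments. Unset Strict Implicit. Unset Printing Implicit Defensive.
Import Order.TTheory GRing.Theory Num.Theory.
Local Open Scope ring_scope.
Local Open Scope classical_set_scope.

Section Defs.
Variable R : realType.
Local Notation C := (R[i]).

Definition rC (x : R) : C := Complex x 0.

Definition sqnorm (z : C) : R := (@complex.Re R z) ^+ 2 + (@complex.Im R z) ^+ 2.

Definition adj m n (A : 'M[C]_(m, n)) : 'M[C]_(n, m) := (map_mx (@conjc R) A)^T.

Definition logb (b x : R) : R := ln x / ln b.

(* largest eigenvalue of a (Hermitian) square matrix: supremum of its real eigenvalues
   (for a Hermitian matrix all eigenvalues are real, so this is lambda_K) *)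
Definition lambda_max n (A : 'M[C]_n) : R := sup [set x : R | eigenvalue A (rC x)].

Definition rdiag n (a : 'I_n -> R) : 'M[C]_n := diag_mx (\row_i rC (a i)).

Definition is_common_eigenvector n (A B : 'M[C]_n) (v : 'cV[C]_n) : Prop :=
  v != 0 /\ (exists a : C, A *m v = a *: v) /\ (exists b : C, B *m v = b *: v).

End Defs.

(* Main.v *)
Require Import Defs.
From HB Require Import structures.
From mathcomp Require Import all_boot all_order all_algebra.
From mathcomp Require Import complex.
From mathcomp Require Import classical_sets reals exp.
From mathcomp Require Import spectral sesquilinear.
From mathcomp Require Import ring lra.
Import Order.TTheory GRing.Theory Num.Theory.
Local Open Scope ring_scope.
Set Implicit Arguments. Unset Strict Implicit. Unset Printing Implicit Defensive.
Section S.
Variable R : realType.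
Local Notation C := R[i].

Lemma adj_mul m n p (A : 'M[C]_(m, n)) (B : 'M[C]_(n, p)) : adj (A *m B) = adj B *m adj A.
Proof. by rewrite /adj map_mxM trmx_mul. Qed.
Lemma adjK m n (A : 'M[C]_(m, n)) : adj (adj A) = A.
Proof. by rewrite /adj map_trmx trmxK; apply/matrixP=> i j; rewrite !mxE conjcK. Qed.
Lemma adjD m n (A B : 'M[C]_(m, n)) : adj (A + B) = adj A + adj B.
Proof. by rewrite /adj map_mxD raddfD. Qed.
Lemma adj_sum m n (I : finType) (F : I -> 'M[C]_(m, n)) : adj (\sum_i F i) = \sum_i adj (F i).
Proof. rewrite /adj; apply/matrixP=> i j; rewrite !mxE !summxE rmorph_sum; by apply: eq_bigr => k _; rewrite !mxE. Qed.
Lemma adjE m n (A : 'M[C]_(m, n)) : adj A = (A ^t* )%sesqui.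
Proof. by rewrite /adj map_trmx. Qed.
Lemma adj_rdiag n (a : 'I_n -> R) : adj (rdiag a) = rdiag a.
Proof.
rewrite /adj /rdiag; apply/matrixP=> i j; rewrite !mxE.
case: eqVneq => [->|ne]; first by rewrite ?eqxx !mulr1n /rC /=; congr Complex; rewrite oppr0.
by rewrite ?(eq_sym j i) ?(negbTE ne) ?mulr0n ?conjc0.
Qed.
Lemma herm_hermsym n (A : 'M[C]_n) : adj A = A -> A \is hermsymmx.
Proof. by move=> h; apply/is_hermitianmxP; rewrite expr0 scale1r -adjE h. Qed.

Lemma spec_herm n (A : 'M[C]_n) : adj A = A ->
  let P := spectralmx A in let d := spectral_diag A in
  [/\ P *m adj P = 1%:M, adj P *m P = 1%:M, A = adj P *m diag_mx d *m P
   & forall i, d 0 i = rC (complex.Re (d 0 i))].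
Proof.
move=> hA P d.
have PU : P \is unitarymx by apply: spectral_unitarymx.
have h1 : P *m adj P = 1%:M by rewrite adjE; apply/unitarymxP.
have Pu : P \in unitmx by apply: unitarymx_unit.
have hinv : invmx P = adj P by rewrite adjE invmx_unitary.
split => //.
- by rewrite -hinv mulVmx.
- have /hermitian_normalmx/orthomx_spectralP := herm_hermsym hA.
  by rewrite hinv.
- move=> i; have /mxOverP/(_ 0 i) := hermitian_spectral_diag_real (herm_hermsym hA).
  rewrite -/d => /RRe_real <-. by [].
Qed.

End S.
Section S2.
Variable R : realType.
Local Notation C := R[i].
Definition Q n (A : 'M[C]_n) (x : 'rV[C]_n) : C := (x *m A *m adj x) 0 0.

Lemma mulcJ_sq (z : C) : z * conjc z = rC (sqnorm z).
Proof. case: z => a b; rewrite /rC /sqnorm /=; congr Complex; ring. Qed.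
Lemma sqnorm_ge0 (z : C) : 0 <= sqnorm z.
Proof. by rewrite /sqnorm addr_ge0 // sqr_ge0. Qed.
Lemma sqnorm_eq0 (z : C) : sqnorm z = 0 -> z = 0.
Proof.
case: z => a b; rewrite /sqnorm /= => h.
have ha : a ^+ 2 = 0 by have := sqr_ge0 a; have := sqr_ge0 b; lra.
have hb : b ^+ 2 = 0 by move: h; rewrite ha add0r.
by move/eqP: ha; rewrite sqrf_eq0 => /eqP ->; move/eqP: hb; rewrite sqrf_eq0 => /eqP ->.
Qed.
Lemma rCD (x y : R) : rC (x + y) = rC x + rC y.
Proof. by rewrite /rC /=; congr Complex; ring. Qed.
Lemma rCM (x y : R) : rC (x * y) = rC x * rC y.
Proof. by rewrite /rC /=; congr Complex; ring. Qed.
Lemma rC_sum (I : finType) (F : I -> R) : rC (\sum_i F i) = \sum_i rC (F i).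
Proof. exact: (big_morph _ rCD). Qed.
Lemma rC_prod (I : finType) (F : I -> R) : rC (\prod_i F i) = \prod_i rC (F i).
Proof. exact: (big_morph _ rCM). Qed.
Lemma rC_le (x y : R) : (rC x <= rC y) = (x <= y).
Proof. exact: lecR. Qed.
Lemma rC_lt (x y : R) : (rC x < rC y) = (x < y).
Proof. exact: ltcR. Qed.
Lemma ReC (x : R) : complex.Re (rC x) = x. Proof. by []. Qed.
Lemma Re_rCM (r : R) (z : C) : complex.Re (rC r * z) = r * complex.Re z.
Proof. by case: z => a b; rewrite /rC /=; ring. Qed.
Lemma rC_inj (x y : R) : rC x = rC y -> x = y.
Proof. by case. Qed.
Lemma rC0 : rC 0 = 0 :> C. Proof. by []. Qed.
Lemma rC1 : rC 1 = 1 :> C. Proof. by []. Qed.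
Lemma rC_nat k : rC k%:R = k%:R :> C.
Proof. by elim: k => // k ih; rewrite -addn1 !natrD rCD ih. Qed.

Lemma QD n (A B : 'M[C]_n) x : Q (A + B) x = Q A x + Q B x.
Proof. by rewrite /Q mulmxDr mulmxDl mxE. Qed.
Lemma Q_sum n (I : finType) (F : I -> 'M[C]_n) x : Q (\sum_i F i) x = \sum_i Q (F i) x.
Proof. by rewrite /Q mulmx_sumr mulmx_suml summxE. Qed.
Lemma Q_mulmx m n (X : 'M[C]_(n, m)) (A : 'M[C]_m) x : Q (X *m A *m adj X) x = Q A (x *m X).
Proof. by rewrite /Q adj_mul !mulmxA. Qed.
Lemma Q_rdiag n (a : 'I_n -> R) x : Q (rdiag a) x = rC (\sum_i a i * sqnorm (x 0 i)).
Proof.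
rewrite /Q /rdiag mul_mx_diag !mxE rC_sum; apply: eq_bigr => i _.
by rewrite !mxE rCM -mulcJ_sq mulrCA mulrA.
Qed.
Lemma Q_ge0_form m n (X : 'M[C]_(n, m)) (a : 'I_m -> R) x : (forall i, 0 <= a i) ->
  0 <= Q (X *m rdiag a *m adj X) x.
Proof.
move=> ha; rewrite Q_mulmx Q_rdiag -rC0 rC_le sumr_ge0 // => i _.
by rewrite mulr_ge0 // sqnorm_ge0.
Qed.

Lemma row_col_mul m n p (X : 'M[C]_(m, n)) (Y : 'M[C]_(n, p)) i j :
  (row i X *m col j Y) 0 0 = (X *m Y) i j.
Proof. by rewrite !mxE; apply: eq_bigr => k _; rewrite !mxE. Qed.
Lemma adj_row m n (X : 'M[C]_(m, n)) i : adj (row i X) = col i (adj X).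
Proof. by apply/matrixP => a b; rewrite !mxE. Qed.

Lemma spec_eig n (A : 'M[C]_n) (hA : adj A = A) i :
  Q A (row i (spectralmx A)) = spectral_diag A 0 i.
Proof.
have [h1 h2 h3 _] := spec_herm hA.
rewrite /Q -row_mul adj_row row_col_mul.
set P := spectralmx A; set d := spectral_diag A.
have -> : P *m A *m adj P = diag_mx d.
  rewrite {1}h3 -/P -/d !mulmxA h1 mul1mx -!mulmxA h1 mulmx1 //.
by rewrite mxE eqxx mulr1n.
Qed.

End S2.
Section S3.
Variable R : realType.
Local Notation C := R[i].
Lemma row_nz n (P : 'M[C]_n) i : P *m adj P = 1%:M -> row i P != 0.
Proof.
move=> h1; apply/eqP => h; have := row_col_mul P (adj P) i i.
by rewrite h mul0mx h1 !mxE eqxx => /eqP; rewrite eq_sym oner_eq0.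
Qed.

Lemma amgm_strict n (e : 'I_n -> R) : (forall i, 0 < e i) -> \sum_i e i = n%:R ->
  (exists i j, e i != e j) -> \prod_i e i < 1.
Proof.
move=> he hs [i0 [j0 hij]].
have hn : (0 < n)%N := leq_ltn_trans (leq0n i0) (ltn_ord i0).
have := @leif_AGM R 'I_n predT e.
move=> /= /(_ (fun i _ => ltW (he i))).
rewrite card_ord.
have -> : \sum_(i in predT) e i = \sum_i e i by apply: eq_bigl.
have -> : \prod_(i in predT) e i = \prod_i e i by apply: eq_bigl.
rewrite hs divff ?pnatr_eq0 -?lt0n // expr1n => h.
rewrite (lt_leif h); apply/negP => /forallP /(_ i0) /implyP /(_ isT) /forallP /(_ j0) /implyP /(_ isT).
by rewrite (negbTE hij).
Qed.
End S3.
Section S4.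
Variable R : realType.
Local Notation C := R[i].
Lemma had_unit n (B : 'M[C]_n) : adj B = B -> (forall x, x != 0 -> 0 < Q B x) ->
  (forall k, B k k = 1) -> (exists k l, k != l /\ B k l != 0) ->
  0 < complex.Re (\det B) < 1.
Proof.
move=> hB hpd hdiag [k0 [l0 [hkl hBkl]]].
have [h1 h2 h3 hreal] := spec_herm hB.
have hev := spec_eig hB.
move: h1 h2 h3 hreal hev.
set P := spectralmx B; set d := spectral_diag B => h1 h2 h3 hreal hev.
pose e i := complex.Re (d 0 i).
have he : forall i, 0 < e i.
  move=> i; rewrite -rC_lt rC0 /e -hreal -hev; apply: hpd; exact: row_nz.
have hdet : \det B = rC (\prod_i e i).
  rewrite {1}h3 !det_mulmx det_diag mulrAC -det_mulmx h2 det1 mul1r rC_prod.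
  by apply: eq_bigr => i _; exact: hreal.
have htr : \sum_i e i = n%:R.
  apply: rC_inj; rewrite rC_sum rC_nat.
  have : \tr B = n%:R.
    by rewrite /mxtrace (eq_bigr (fun _ => 1)) ?sumr_const ?card_ord // => i _; exact: hdiag.
  rewrite {1}h3 mxtrace_mulC mulmxA h1 mul1mx mxtrace_diag => <-.
  by apply: eq_bigr => i _; rewrite -hreal.
rewrite hdet ReC; apply/andP; split; first by apply: prodr_gt0 => i _.
apply: amgm_strict => //.
have [ok|] := boolP [exists i, [exists j, e i != e j]].
  by move/existsP: ok => [i /existsP [j hj]]; exists i, j.
rewrite negb_exists => /forallP hall.
have heq : forall i, e i = e k0.
  by move=> i; move: (hall i); rewrite negb_exists => /forallP /(_ k0); rewrite negbK => /eqP.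
have hn : (0 < n)%N := leq_ltn_trans (leq0n k0) (ltn_ord k0).
have he1 : forall i, e i = 1.
  move=> i; rewrite heq; move: htr; rewrite (eq_bigr (fun _ => e k0)) // sumr_const card_ord.
  move=> h; have hn0 : (n%:R : R) != 0 by rewrite pnatr_eq0 -lt0n.
  by apply: (mulIf hn0) => /=; rewrite mul1r mulr_natr.
have hD : diag_mx d = 1%:M.
  apply/matrixP => i j; rewrite !mxE hreal; have := he1 i; rewrite /e => ->; by [].
move: hBkl; rewrite h3 hD mulmx1 h2 mxE (negbTE hkl) /=. by rewrite eqxx.
Qed.
End S4.
Section S5.
Variable R : realType.
Local Notation C := R[i].

Lemma adj_delta n k : adj (delta_mx 0 k : 'rV[C]_n) = delta_mx k 0.
Proof.
apply/matrixP => i j; rewrite !mxE.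
by rewrite andbC; case: (_ && _); rewrite ?conjc0 ?conjc1.
Qed.

Lemma Q_delta n (A : 'M[C]_n) k : Q A (delta_mx 0 k) = A k k.
Proof. by rewrite /Q -rowE adj_delta -colE !mxE. Qed.

Lemma delta_nz n (k : 'I_n) : (delta_mx 0 k : 'rV[C]_n) != 0.
Proof. by apply/eqP => /matrixP /(_ 0 k); rewrite !mxE !eqxx /= => /eqP; rewrite oner_eq0. Qed.

Lemma pos_real (z : C) : 0 < z -> z = rC (complex.Re z) /\ 0 < complex.Re z.
Proof. case: z => a b; rewrite ltcE /= => /andP [/eqP hb h]; rewrite hb; split => //. Qed.

Lemma diag_sand n (s : 'I_n -> R) (A : 'M[C]_n) k l :
  (rdiag s *m A *m rdiag s) k l = rC (s k) * A k l * rC (s l).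
Proof. by rewrite /rdiag mul_mx_diag mxE mul_diag_mx !mxE. Qed.

Lemma hadamard n (A : 'M[C]_n) : adj A = A -> (forall x, x != 0 -> 0 < Q A x) ->
  (exists k l, k != l /\ A k l != 0) ->
  0 < complex.Re (\det A) < \prod_k complex.Re (A k k).
Proof.
move=> hA hpd [k0 [l0 [hkl hAkl]]].
pose a k := complex.Re (A k k).
have hkk : forall k, A k k = rC (a k) /\ 0 < a k.
  by move=> k; apply: pos_real; rewrite -Q_delta; apply: hpd; apply: delta_nz.
pose s k := (Num.sqrt (a k))^-1.
have hs : forall k, s k * a k * s k = 1.
  move=> k; have [_ ha] := hkk k.
  rewrite mulrAC -expr2 /s exprVn sqr_sqrtr ?ltW // mulVf //. by rewrite gt_eqF.
have hs0 : forall k, rC (s k) != 0.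
  move=> k; apply/eqP => h; have := hs k; move: h => [->]; rewrite !mul0r => /eqP.
  by rewrite eq_sym oner_eq0.
pose S := rdiag s.
pose B := S *m A *m S.
have hB : adj B = B by rewrite /B !adj_mul adj_rdiag hA mulmxA.
have hBQ : forall x, Q B x = Q A (x *m S).
  by move=> x; rewrite /B /S -{2}(adj_rdiag s) Q_mulmx.
have hBpd : forall x, x != 0 -> 0 < Q B x.
  move=> x hx; rewrite hBQ; apply: hpd; apply: contraNneq hx => h.
  apply/eqP/matrixP => i j; move/matrixP: h => /(_ i j).
  rewrite /S /rdiag mul_mx_diag !mxE => /eqP; rewrite mulf_eq0 (negbTE (hs0 j)) orbF.
  by rewrite (ord1 i) => /eqP.
have hBd : forall k, B k k = 1.
  by move=> k; rewrite /B diag_sand (proj1 (hkk k)) -!rCM hs.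
have hBo : exists k l, k != l /\ B k l != 0.
  by exists k0, l0; split => //; rewrite /B diag_sand !mulf_neq0.
have := had_unit hB hBpd hBd hBo.
have hdetS : \det S = rC (\prod_k s k).
  by rewrite /S /rdiag det_diag rC_prod; apply: eq_bigr => i _; rewrite mxE.
rewrite /B !det_mulmx hdetS mulrC mulrA -rCM Re_rCM.
set p := \prod_k s k; set D := complex.Re (\det A).
have hq : p * p * \prod_k a k = 1.
  rewrite /p -big_split /= -big_split /=; rewrite (eq_bigr (fun _ => 1)) ?prodr_const ?expr1n //.
  by move=> k _; rewrite mulrAC hs.
have hq0 : 0 < \prod_k a k by apply: prodr_gt0 => k _; exact: (proj2 (hkk k)).
have -> : \prod_k complex.Re (A k k) = \prod_k a k by [].
move: hq hq0; set q := \prod_k a k; set X := p * p => hq hq0 /andP [h1 h2].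
have eD : D = (X * D) * q by rewrite mulrAC hq mul1r.
rewrite eD; apply/andP; split; first exact: mulr_gt0.
nra.
Qed.
End S5.
Section S6.
Variable R : realType.
Local Notation C := R[i].
Lemma argmax_ex n (k : 'I_n) (e : 'I_n -> R) : exists i0, forall i, e i <= e i0.
Proof.
case: (@arg_maxP _ _ 'I_n k xpredT e isT) => i0 _ hi0.
by exists i0 => i; apply: hi0.
Qed.
End S6.
Section S7.
Variable R : realType.
Local Notation C := R[i].

Lemma row_diag_mul n (d : 'rV[C]_n) (P : 'M[C]_n) i :
  row i (diag_mx d *m P) = d 0 i *: row i P.
Proof. by apply/rowP => j; rewrite mul_diag_mx !mxE. Qed.

Lemma lam_bound n (Y : 'M[C]_n) : adj Y = Y ->
  forall k, complex.Re (Y k k) <= lambda_max Y.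
Proof.
move=> hY k.
have [h1 h2 h3 hreal] := spec_herm hY.
move: h1 h2 h3 hreal.
set P := spectralmx Y; set d := spectral_diag Y => h1 h2 h3 hreal.
pose e i := complex.Re (d 0 i).
have [i0 hi0] := argmax_ex k e.
have hPY : P *m Y = diag_mx d *m P.
  by rewrite {1}h3 !mulmxA h1 mul1mx.
have hw : \sum_j sqnorm (P j k) = 1.
  apply: rC_inj; rewrite rC_sum rC1.
  have := congr1 (fun M : 'M[C]_n => M k k) h2; rewrite /= !mxE eqxx mulr1n => <-.
  by apply: eq_bigr => j _; rewrite !mxE mulrC mulcJ_sq.
have hYkk : complex.Re (Y k k) = \sum_j e j * sqnorm (P j k).
  have -> : Y k k = rC (\sum_j e j * sqnorm (P j k)).
    rewrite {1}h3 mul_mx_diag rC_sum !mxE; apply: eq_bigr => j _.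
    rewrite [X in X * _]mxE /adj [X in X * _ * _]mxE [X in X * _ * _]mxE rCM -mulcJ_sq /e -hreal; ring.
  by [].
have hle : complex.Re (Y k k) <= e i0.
  rewrite hYkk -[e i0]mulr1 -hw mulr_sumr; apply: ler_sum => j _.
  by apply: ler_wpM2r; [exact: sqnorm_ge0 | exact: hi0].
apply: (le_trans hle).
have hE : eigenvalue Y (rC (e i0)).
  apply/eigenvalueP; exists (row i0 P); last exact: row_nz.
  by rewrite -row_mul hPY row_diag_mul -hreal.
rewrite /lambda_max; apply: ub_le_sup; last exact: hE.
exists (e i0) => x /= /eigenvalueP [v hv vnz].
pose w := v *m adj P.
have hwD : w *m diag_mx d = rC x *: w.
  have hY2 : Y *m adj P = adj P *m diag_mx d by rewrite {1}h3 -mulmxA h1 mulmx1.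
  by rewrite /w -mulmxA -hY2 mulmxA hv scalemxAl.
have wnz : w != 0.
  apply: contraNneq vnz => hw0.
  by rewrite -[v]mulmx1 -h2 mulmxA -/w hw0 mul0mx.
have [j hj] : exists j, w 0 j != 0.
  case: (boolP [exists j, w 0 j != 0]) => [/existsP //|].
  rewrite negb_exists => /forallP h; exfalso; move/eqP: wnz; apply.
  by apply/rowP => j; move: (h j); rewrite negbK => /eqP ->; rewrite mxE.
have := congr1 (fun M : 'rV[C]_n => M 0 j) hwD.
rewrite /= mul_mx_diag [in X in X = _]mxE [in X in _ = X]mxE.
rewrite [w 0 j * d 0 j]mulrC => hh; have := mulIf hj hh.
by rewrite hreal => /rC_inj <-; apply: hi0.
Qed.
End S7.
Section S8.
Variable R : realType.
Lemma ln_prod (I : finType) (F : I -> R) : (forall i, 0 < F i) ->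
  ln (\prod_i F i) = \sum_i ln (F i).
Proof.
move=> hF.
suff : 0 < \prod_i F i /\ \sum_i ln (F i) = ln (\prod_i F i) by case=> _ ->.
elim/big_rec2: _ => [|i x y _ [hy ->]]; first by rewrite ln1.
split; first by rewrite mulr_gt0.
by rewrite lnM // posrE.
Qed.

Lemma le_max_big n (f : 'I_n -> R) k : f k <= \big[Num.max/0]_(k' < n) f k'.
Proof. exact: le_bigmax. Qed.

Lemma final_ineq (b : R) n (Nt d : 'I_n -> R) (D T : R) : 1 < b -> 0 < D ->
  D < \prod_k d k -> (forall k, 0 < Nt k) -> (forall k, d k <= Nt k + T) ->
  (forall k, 0 < d k) ->
  logb b D - \sum_k logb b (Nt k) < \sum_k logb b (1 + T / Nt k).
Proof.
move=> hb hD hDd hNt hdT hd.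
have hlb : 0 < ln b by apply: ln_gt0.
rewrite /logb -mulr_suml -mulrBl -mulr_suml ltr_pM2r ?invr_gt0 //.
have h1 : forall k, 0 < 1 + T / Nt k.
  move=> k; have := hdT k; have := hd k; have := hNt k => a1 a2 a3.
  have -> : 1 + T / Nt k = (Nt k + T) / Nt k by rewrite mulrDl divff ?gt_eqF.
  by rewrite divr_gt0 // (lt_le_trans a2 a3).
have hsplit : forall k, ln (Nt k + T) = ln (Nt k) + ln (1 + T / Nt k).
  move=> k; rewrite -lnM ?posrE //; congr ln.
  by rewrite mulrDr mulr1 mulrCA divff ?mulr1 // gt_eqF.
have hA : ln D < \sum_k ln (d k).
  by rewrite -ln_prod // ltr_ln // posrE // prodr_gt0.
have hB : \sum_k ln (d k) <= \sum_k ln (Nt k) + \sum_k ln (1 + T / Nt k).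
  rewrite -big_split /=; apply: ler_sum => k _; rewrite -hsplit ler_ln ?posrE //.
  exact: (lt_le_trans (hd k) (hdT k)).
have := lt_le_trans hA hB; lra.
Qed.
End S8.
Section S9.
Variable R : realType.
Local Notation C := R[i].

Lemma adj_mxrow (J K : nat) (B : 'I_J -> 'M[C]_K) :
  adj (\mxrow_j B j) = \mxcol_j adj (B j).
Proof.
rewrite /adj; have -> : map_mx conjc (\mxrow_j B j) = \mxrow_j map_mx conjc (B j).
  by apply/matrixP => a c; rewrite !mxE.
by rewrite tr_mxrow.
Qed.

Lemma adj_Yf m n (X : 'M[C]_(m, n)) a : adj (X *m rdiag a *m adj X) = X *m rdiag a *m adj X.
Proof. by rewrite !adj_mul adjK adj_rdiag mulmxA. Qed.

Lemma conj_Yf m n p (D : 'M[C]_(p, m)) (X : 'M[C]_(m, n)) a :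
  D *m (X *m rdiag a *m adj X) *m adj D = (D *m X) *m rdiag a *m adj (D *m X).
Proof. by rewrite adj_mul !mulmxA. Qed.

Lemma nonneg_real (z : C) : 0 <= z -> z = rC (complex.Re z) /\ 0 <= complex.Re z.
Proof. by case: z => a b; rewrite lecE /= => /andP [/eqP hb h]; rewrite hb; split. Qed.

Lemma diag_sand2 n (r : 'rV[C]_n) (Z : 'M[C]_n) k :
  (diag_mx r *m Z *m adj (diag_mx r)) k k = rC (sqnorm (r 0 k)) * Z k k.
Proof.
rewrite -mulcJ_sq !mxE; rewrite (bigD1 k) //= big1 ?addr0.
  rewrite mul_diag_mx !mxE eqxx mulr1n; ring.
by move=> l hl; rewrite !mxE eq_sym (negbTE hl) mulr0n conjc0 mulr0.
Qed.

Lemma sqnorm_gt0 (z : C) : z != 0 -> 0 < sqnorm z.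
Proof.
move=> hz; rewrite lt_def sqnorm_ge0 andbT; apply/eqP => h.
by move/eqP: hz; apply; apply: sqnorm_eq0.
Qed.
End S9.
Unset Implicit Arguments.

Theorem mainTheorem1 (R : realType) (b : R) (hb : 1 < b)
  (K N J : nat) (hK : (0 < K)%N) (hN : (0 < N)%N) (hNK : (N <= K)%N) (hJ : (0 < J)%N)
  (N0 : R) (hN0 : 0 < N0) (hdb : 'I_K -> R[i]) (P : 'I_K -> R) (hP : forall k, 0 <= P k)
  (hcb : 'I_J -> 'I_K -> R[i]) (hcb0 : forall j k, hcb j k != 0)
  (M1 M2 : 'I_J -> 'M[R[i]]_(K, N)) (a1 a2 : 'I_J -> 'I_N -> R)
  (ha1 : forall j i, 0 <= a1 j i) (ha2 : forall j i, 0 <= a2 j i) :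
  let Nt := fun k : 'I_K => N0 + sqnorm (hdb k) * P k in
  let Kn : 'M[R[i]]_K := rdiag Nt in
  let Hj := fun j : 'I_J => (diag_mx (\row_k hcb j k) : 'M[R[i]]_K) in
  let Kxj := fun j : 'I_J =>
    M1 j *m rdiag (a1 j) *m adj (M1 j) + M2 j *m rdiag (a2 j) *m adj (M2 j) in
  let H : 'M[R[i]]_(K, \sum_(j < J) K) := \mxrow_(j < J) Hj j in
  let Kx : 'M[R[i]]_(\sum_(j < J) K) := \mxdiag_(j < J) Kxj j in
  let Ky := Kn + H *m Kx *m adj H in
  let Cc := logb b (complex.Re (\det Ky)) - \sum_(k < K) logb b (Nt k) in
  let tau := fun j : 'I_J =>
    lambda_max (M1 j *m rdiag (a1 j) *m adj (M1 j))
    + lambda_max (M2 j *m rdiag (a2 j) *m adj (M2 j)) in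
  ~ (exists v : 'cV[R[i]]_K, is_common_eigenvector Kn (H *m Kx *m adj H) v) ->
  Cc < \sum_(k < K) logb b (1 + (\sum_(j < J) tau j * \big[Num.max/0]_(k' < K) sqnorm (hcb j k'))
                                / Nt k).
Proof.
move=> Nt Kn Hj Kxj H Kx Ky Cc tau hno.
have hNt : forall k, 0 < Nt k.
  by move=> k; rewrite /Nt; have := sqnorm_ge0 (hdb k); have := hP k; nra.
have hG0 : H *m Kx *m adj H = \sum_j (Hj j *m Kxj j *m adj (Hj j)).
  by rewrite /H /Kx mul_mxrow_mxdiag adj_mxrow mul_mxrow_mxcol.
have hG1 : forall j, Hj j *m Kxj j *m adj (Hj j) =
    (Hj j *m M1 j) *m rdiag (a1 j) *m adj (Hj j *m M1 j)
    + (Hj j *m M2 j) *m rdiag (a2 j) *m adj (Hj j *m M2 j).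
  by move=> j; rewrite /Kxj mulmxDr mulmxDl !conj_Yf.
move: hno; rewrite /Ky; set G := H *m Kx *m adj H => hno.
have hGh : adj G = G.
  by rewrite /G hG0 adj_sum; apply: eq_bigr => j _; rewrite hG1 adjD !adj_Yf.
have hGpsd : forall x, 0 <= Q G x.
  move=> x; rewrite /G hG0 Q_sum; apply: sumr_ge0 => j _.
  by rewrite hG1 QD addr_ge0 // Q_ge0_form.
have hKnQ : forall x, x != 0 -> 0 < Q Kn x.
  move=> x hx; rewrite /Kn Q_rdiag -rC0 rC_lt.
  have [i hi] : exists i, x 0 i != 0.
    case: (boolP [exists i, x 0 i != 0]) => [/existsP //|].
    rewrite negb_exists => /forallP h; exfalso; move/eqP: hx; apply.
    by apply/rowP => j; move: (h j); rewrite negbK => /eqP; rewrite mxE => ->.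
  rewrite (bigD1 i) //=.
  have h1 : 0 < Nt i * sqnorm (x 0 i) by rewrite mulr_gt0 // sqnorm_gt0.
  have h2 : 0 <= \sum_(j | j != i) Nt j * sqnorm (x 0 j).
    by apply: sumr_ge0 => j _; rewrite mulr_ge0 ?sqnorm_ge0 // ltW.
  lra.
have hKyh : adj (Kn + G) = Kn + G by rewrite adjD adj_rdiag hGh.
have hKypd : forall x, x != 0 -> 0 < Q (Kn + G) x.
  by move=> x hx; rewrite QD -(addr0 0) ltr_leD // hKnQ.
have hoff : exists k l, k != l /\ (Kn + G) k l != 0.
  case: (boolP [exists k, [exists l, (k != l) && ((Kn + G) k l != 0)]]).
    by move=> /existsP [k /existsP [l /andP [h1 h2]]]; exists k, l.
  rewrite negb_exists => /forallP hall; exfalso; apply: hno.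
  have hz : forall k l, k != l -> G k l = 0.
    move=> k l hkl; move: (hall k); rewrite negb_exists => /forallP /(_ l).
    rewrite hkl /= negbK mxE /Kn /rdiag mxE (negbTE hkl) mulr0n add0r => /eqP //.
  pose k0 : 'I_K := Ordinal hK; clearbody G.
  exists (delta_mx k0 0); split.
    by apply/eqP => /matrixP /(_ k0 0); rewrite !mxE !eqxx /= => /eqP; rewrite oner_eq0.
  split.
    exists (rC (Nt k0)); apply/matrixP => i j; rewrite (ord1 j) -colE !mxE.
    by case: eqVneq => [->|hne]; rewrite ?mulr1n ?mulr0n ?mulr1 ?mulr0 //= ?mulr0.
  exists (G k0 k0); apply/matrixP => i j; rewrite (ord1 j) -colE !mxE.
  case: eqVneq => [->|hne]; rewrite /= ?mulr1 ?mulr0 //.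
  by rewrite hz.
have /andP [hdet1 hdet2] := hadamard hKyh hKypd hoff.
pose y1 j k := complex.Re ((M1 j *m rdiag (a1 j) *m adj (M1 j)) k k).
pose y2 j k := complex.Re ((M2 j *m rdiag (a2 j) *m adj (M2 j)) k k).
have hy1 : forall j k, (M1 j *m rdiag (a1 j) *m adj (M1 j)) k k = rC (y1 j k) /\ 0 <= y1 j k.
  by move=> j k; apply: nonneg_real; rewrite -Q_delta Q_ge0_form.
have hy2 : forall j k, (M2 j *m rdiag (a2 j) *m adj (M2 j)) k k = rC (y2 j k) /\ 0 <= y2 j k.
  by move=> j k; apply: nonneg_real; rewrite -Q_delta Q_ge0_form.
have hKykk : forall k, (Kn + G) k k = rC (Nt k + \sum_j sqnorm (hcb j k) * (y1 j k + y2 j k)).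
  move=> k; rewrite [LHS]mxE /Kn /rdiag [diag_mx _ _ _]mxE eqxx mulr1n rCD; congr (_ + _); first by rewrite mxE.
  rewrite /G hG0 summxE rC_sum; apply: eq_bigr => j _.
  rewrite /Hj diag_sand2 [in X in X * _]mxE /Kxj [in X in _ * X]mxE (proj1 (hy1 j k)) (proj1 (hy2 j k)).
  by rewrite -rCD -rCM.
have hdk : forall k, complex.Re ((Kn + G) k k) <=
    Nt k + \sum_j tau j * \big[Num.max/0]_(k' < K) sqnorm (hcb j k').
  move=> k; rewrite hKykk ReC lerD2l; apply: ler_sum => j _.
  rewrite [tau j * _]mulrC; apply: ler_pM.
  - exact: sqnorm_ge0.
  - by rewrite addr_ge0 // ?(proj2 (hy1 j k)) ?(proj2 (hy2 j k)).
  - exact: le_max_big.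
  - by rewrite /tau lerD // lam_bound // adj_Yf.
have hdpos : forall k, 0 < complex.Re ((Kn + G) k k).
  by move=> k; apply: (proj2 (pos_real _)); rewrite -Q_delta hKypd // delta_nz.
rewrite /Cc /Ky -/G.
by apply: (final_ineq (d := fun k => complex.Re ((Kn + G) k k))).
Qed.
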